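(* Let $A$ be a combinatorially rich set in $(\mathbb{N},+)$. Then (1) $A$ contains a family of $2^\omega$ almost disjoint subsets each of which is combinatorially rich; and (2) $A$ can be split into $\omega$ pairwise disjoint subsets each of which is combinatorially rich.
   Context: $\mathbb{N}=\{1,2,\dots\}$. For $n\in\mathbb{N}$ and a set $X$, $\mathcal{P}_n(X)$ is the set of $n$-element subsets of $X$, and ${}^mX$ is the set of sequences of length $m$ in $X$. For a commutative semigroup $(S,+)$, $L\in\mathcal{P}_n({}^mS)$, $a\in S$ and nonempty $H\subseteq\{1,\dots,m\}$, put $S_L(a,H)=\{a+\sum_{t\in H}f(t): f\in L\}$. A set $A\subseteq S$ is combinatorially rich if there is a sequence $\langle r_n\rangle_{n=1}^\infty$ in $\mathbb{N}$ such that for each $n\in\mathbb{N}$ and each $L\in\mathcal{P}_n({}^{r_n}S)$ there exist $a\in S$ and nonempty $H\subseteq\{1,\dots,r_n\}$ with $S_L(a,H)\subseteq A$. For an infinite set $X$, a family of almost disjoint subsets of $X$ is a family of subsets of $X$ each of cardinality $|X|$ such that any two distinct members intersect in a set of cardinality less than $|X|$. *)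

(* Defs.v *)
(* The semigroup (N,+) with N = {1,2,...} is modelled by the
   positive elements of nat; subsets of N are predicates nat -> Prop that only
   contain positive numbers. *)
From mathcomp Require Import all_boot.
Set Implicit Arguments. Unset Strict Implicit. Unset Printing Implicit Defensive.

Definition inN (x : nat) : Prop := 0 < x.

Definition subsetN (A : nat -> Prop) : Prop := forall x, A x -> inN x.

(* S_L(a,H) = { a + sum_{t in H} f(t) : f in L },  sequences of length m
   are m-tuples, indexed by 'I_m (= {1,...,m} shifted by one). *)
Definition S_L {m : nat} (L : seq (m.-tuple nat)) (a : nat) (H : {set 'I_m})
  (x : nat) : Prop :=
  exists2 f, f \in L & x = a + \sum_(t in H) tnth f t.

Definition in_Pn_seqN (n : nat) {m : nat} (L : seq (m.-tuple nat)) : Prop :=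
  uniq L /\ size L = n /\ (forall f, f \in L -> forall t, inN (tnth f t)).

Definition comb_rich (A : nat -> Prop) : Prop :=
  exists r : nat -> nat,
    (forall n, inN n -> inN (r n)) /\
    forall n, inN n ->
    forall L : seq ((r n).-tuple nat), in_Pn_seqN n L ->
    exists a, exists H : {set 'I_(r n)},
      inN a /\ H != set0 /\ (forall x, S_L L a H x -> A x).

(* finiteness / infiniteness of a subset of nat (for subsets of a countably
   infinite set, cardinality < |X| = omega means finite, and cardinality |X|
   means infinite) *)
Definition finite_nat (B : nat -> Prop) : Prop := exists N, forall x, B x -> x < N.
Definition infinite_nat (B : nat -> Prop) : Prop := ~ finite_nat B.

(* Main.v *)
Require Import Defs.
From mathcomp Require Import all_boot.
From Stdlib Require Import ClassicalEpsilon Classical FunctionalExtensionality.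
Set Implicit Arguments.

Definition CRprop (A : nat -> Prop) (r : nat -> nat) : Prop :=
  forall n, inN n -> forall L : seq ((r n).-tuple nat), in_Pn_seqN n L ->
    exists a, exists H : {set 'I_(r n)},
      inN a /\ H != set0 /\ (forall x, S_L L a H x -> A x).

Definition conv m (s : seq (seq nat)) : seq (m.-tuple nat) :=
  map (fun x => [tuple nth 0 x i | i < m]) s.

Lemma conv_val m (L : seq (m.-tuple nat)) : conv m (map val L) = L.
Proof.
rewrite /conv -map_comp -[RHS]map_id; apply: eq_map => f /=.
apply: eq_from_tnth => i; by rewrite tnth_mktuple (tnth_nth 0).
Qed.

Definition valid (r : nat -> nat) n s := inN n /\ in_Pn_seqN n (conv (r n) s).

Definition keyP (A : nat -> Prop) (r : nat -> nat) K n s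
  (BM : (nat -> Prop) * nat) : Prop :=
  K <= BM.2 /\ (forall x, BM.1 x -> K <= x < BM.2) /\ (forall x, BM.1 x -> A x) /\
  (valid r n s -> exists a, exists H : {set 'I_(r n)}, inN a /\ H != set0 /\
      forall x, S_L (conv (r n) s) a H x -> BM.1 x) /\
  (~ valid r n s -> forall x, ~ BM.1 x).

Lemma mem_sum_le (T : eqType) (F : T -> nat) (L : seq T) f :
  f \in L -> F f <= \sum_(g <- L) F g.
Proof.
elim: L => //= g L IH; rewrite in_cons big_cons => /orP [/eqP -> | /IH h].
  exact: leq_addr.
exact: leq_trans h (leq_addl _ _).
Qed.
Arguments mem_sum_le {T} F {L f}.

Definition shift m K (f : m.-tuple nat) : m.-tuple nat := [tuple tnth f i + K | i < m].

Lemma key A r (hr : CRprop A r) K n s : exists BM, keyP A r K n s BM.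
Proof.
case: (classic (valid r n s)) => [[Hn [Hu [Hs Hp]]] | Hnv]; last first.
  exists ((fun _ => False), K); rewrite /keyP /=.
  split; first by []. split; first by []. split; first by [].
  split; last by move=> _ x. by move=> hv; case: (Hnv hv).
set m := r n; set L := conv m s.
have shift_inj : injective (@shift m K).
  move=> f g e; apply: eq_from_tnth => i.
  by move: (congr1 (fun h => tnth h i) e); rewrite !tnth_mktuple => /addIn.
have HL' : in_Pn_seqN n (map (@shift m K) L).
  split; first by rewrite map_inj_uniq.
  split; first by rewrite size_map.
  move=> f /mapP [g Hg ->] t; rewrite tnth_mktuple /inN.
  by rewrite addn_gt0 (Hp g Hg t).
have [a [H [Ha [HH Hsub]]]] := hr n Hn _ HL'.
set a' := a + #|H| * K.
exists (S_L L a' H, a' + \sum_(g <- L) \sum_(t < m) tnth g t + 1) => /=.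
have Ka : K <= a'.
  rewrite /a'; apply: leq_trans (leq_addl _ _).
  by rewrite leq_pmull // card_gt0.
split; first by rewrite -addnA; exact: leq_trans Ka (leq_addr _ _).
split.
  move=> x [f Hf ->]; rewrite (leq_trans Ka (leq_addr _ _)) /=.
  rewrite addn1 ltnS leq_add2l.
  apply: (leq_trans _ (mem_sum_le (fun g : m.-tuple nat => \sum_(t < m) tnth g t) Hf)) => /=.
  rewrite [X in _ <= X](bigID (fun t => t \in H)) /=; exact: leq_addr.
split.
  move=> x [f Hf ->]; apply: Hsub; exists (shift K f); first exact: map_f.
  rewrite /a' -addnA; congr (a + _).
  under [in RHS]eq_bigr => t _ do rewrite tnth_mktuple.
  by rewrite big_split /= sum_nat_const addnC.
split; last by move=> hh; case: (hh (conj Hn (conj Hu (conj Hs Hp)))).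
move=> _; exists a', H; split; first by rewrite /inN /a' addn_gt0 Ha.
by split.
Qed.

Definition pickBM A r (hr : CRprop A r) K n s :=
  proj1_sig (constructive_indefinite_description _ (key hr K n s)).

Lemma pickP A r (hr : CRprop A r) K n s : keyP A r K n s (pickBM hr K n s).
Proof. exact: proj2_sig (constructive_indefinite_description _ (key hr K n s)). Qed.

Definition TT := (nat * (nat * seq (seq nat)))%type.
Definition task (k : nat) : TT := odflt (0, (0, [::])) (@pickle_inv TT k).

Fixpoint thr A r (hr : CRprop A r) k : nat :=
  match k with
  | 0 => 0
  | k'.+1 => (pickBM hr (thr hr k') (task k').2.1 (task k').2.2).2
  end.

Definition batch A r (hr : CRprop A r) k x :=
  (pickBM hr (thr hr k) (task k).2.1 (task k).2.2).1 x.


Lemma thr_step A r (hr : CRprop A r) k : thr hr k <= thr hr k.+1.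
Proof. by have [h _] := pickP hr (thr hr k) (task k).2.1 (task k).2.2. Qed.

Lemma thr_mono A r (hr : CRprop A r) k d : thr hr k <= thr hr (k + d).
Proof.
elim: d => [|d IH]; first by rewrite addn0.
by rewrite addnS; apply: leq_trans IH (thr_step _ _).
Qed.

Lemma batch_bounds A r (hr : CRprop A r) k x :
  batch hr k x -> thr hr k <= x < thr hr k.+1.
Proof.
by have [_ [h _]] := pickP hr (thr hr k) (task k).2.1 (task k).2.2; apply: h.
Qed.
Arguments batch_bounds {A r hr k x}.

Lemma batch_A A r (hr : CRprop A r) k x : batch hr k x -> A x.
Proof.
by have [_ [_ [h _]]] := pickP hr (thr hr k) (task k).2.1 (task k).2.2; apply: h.
Qed.
Arguments batch_A {A r hr k x}.

Lemma batch_uniq A r (hr : CRprop A r) k k' x :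
  batch hr k x -> batch hr k' x -> k = k'.
Proof.
wlog: k k' / k <= k'.
  move=> W h1 h2; case: (leqP k k') => l; first exact: W.
  by apply/esym; apply: W h2 h1; apply: ltnW.
rewrite leq_eqVlt => /orP [/eqP // | lt] h1 h2.
move/batch_bounds: h1 => /andP [_ b1]; move/batch_bounds: h2 => /andP [b2 _].
have := thr_mono hr k.+1 (k' - k.+1); rewrite subnKC // => b3.
by have := leq_trans b1 (leq_trans b3 b2); rewrite ltnn.
Qed.
Arguments batch_uniq {A r hr k k' x}.

Lemma batch_valid A r (hr : CRprop A r) k x :
  batch hr k x -> valid r (task k).2.1 (task k).2.2.
Proof.
have [_ [_ [_ [_ h]]]] := pickP hr (thr hr k) (task k).2.1 (task k).2.2.
move=> hb; apply: NNPP => hv; exact: h hv x hb.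
Qed.
Arguments batch_valid {A r hr k x}.

Lemma batch_pickle A r (hr : CRprop A r) k x :
  batch hr k x -> pickle (task k) = k.
Proof.
move=> hb; have [hn _] := batch_valid hb.
move: hn; rewrite /task.
case E: (@pickle_inv TT k) => [t|] /=; last by rewrite /inN.
by move=> _; have := @pickle_invK TT k; rewrite E.
Qed.
Arguments batch_pickle {A r hr k x}.

Lemma batch_spec A r (hr : CRprop A r) k p n s :
  task k = (p, (n, s)) -> valid r n s ->
  exists a, exists H : {set 'I_(r n)}, inN a /\ H != set0 /\
    forall x, S_L (conv (r n) s) a H x -> batch hr k x.
Proof.
move=> E; rewrite /batch E /=.
by have [_ [_ [_ [h _]]]] := pickP hr (thr hr k) n s.
Qed.
Arguments batch_spec {A r} hr {k p n s}.

Lemma task_pickle (t : TT) : task (pickle t) = t.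
Proof. by rewrite /task pickleK_inv. Qed.

Lemma CR_infinite B : comb_rich B -> infinite_nat B.
Proof.
move=> [r [hr1 hr]] [N HN].
have h1 : inN 1 by [].
set g : (r 1).-tuple nat := [tuple N.+1 | i < r 1].
have HL : in_Pn_seqN 1 [:: g].
  split => //; split => //; move=> f; rewrite inE => /eqP -> t.
  by rewrite tnth_mktuple.
have [a [H [Ha [HH Hs]]]] := hr 1 h1 _ HL.
have hx : S_L [:: g] a H (a + #|H| * N.+1).
  exists g; first by rewrite inE.
  congr (a + _); rewrite -sum_nat_const; apply: eq_bigr => t _.
  by rewrite tnth_mktuple.
have l2 := HN _ (Hs _ hx).
have l1 : N.+1 <= a + #|H| * N.+1.
  by apply: leq_trans (leq_addl _ _); rewrite leq_pmull // card_gt0.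
have := ltn_trans (ltnSn N) (leq_ltn_trans l1 l2); by rewrite ltnn.
Qed.
Arguments CR_infinite {B}.

Definition code (b : nat -> bool) (j : nat) : nat := pickle (mkseq b j).

Definition tdec (j : nat) : nat * seq (seq nat) :=
  odflt (0, [::]) (@pickle_inv (nat * seq (seq nat))%type j).

Fixpoint bsum (f : nat -> nat) (d : nat) : nat :=
  match d with 0 => 0 | d'.+1 => bsum f d' + f d' end.

Lemma bsum_ge f d j : j < d -> f j <= bsum f d.
Proof.
elim: d => // d IH; rewrite ltnS leq_eqVlt => /orP [/eqP -> | /IH h] /=.
  exact: leq_addl.
exact: leq_trans h (leq_addr _ _).
Qed.
Arguments bsum_ge f {d j}.

Theorem theorem3p2 (A : nat -> Prop) :
  subsetN A -> comb_rich A ->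
  (* (1) a family of 2^omega (indexed injectively by nat -> bool) almost
     disjoint subsets of A, each combinatorially rich *)
  (exists F : (nat -> bool) -> (nat -> Prop),
      (forall b, forall x, F b x -> A x) /\
      (forall b, infinite_nat (F b)) /\
      (forall b b', b <> b' -> finite_nat (fun x => F b x /\ F b' x)) /\
      (forall b, comb_rich (F b))) /\
  (* (2) a splitting of A into omega pairwise disjoint subsets, each
     combinatorially rich *)
  (exists B : nat -> (nat -> Prop),
      (forall x, A x <-> exists i, B i x) /\
      (forall i j x, i <> j -> B i x -> B j x -> False) /\
      (forall i, comb_rich (B i))).
Proof.
move=> _ [r [hr1 hr]].
have hr' : CRprop A r := hr.
split.
- pose F (b : nat -> bool) (x : nat) :=
    exists k, batch hr' k x /\ (task k).1 = code b (pickle (task k).2).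
  have FCR : forall b, comb_rich (F b).
    move=> b; exists r; split => // n Hn L HL.
    set s := map val L.
    set t : TT := (code b (pickle (n, s)), (n, s)).
    have Ht := task_pickle t.
    have Hv : valid r n s by split => //; rewrite /s conv_val.
    have [a [H [Ha [HH Hs]]]] := batch_spec hr' Ht Hv.
    exists a, H; split => //; split => // x hx.
    exists (pickle t); split; last by rewrite Ht.
    by apply: Hs; rewrite /s conv_val.
  exists F; split; first by move=> b x [k [hk _]]; exact: batch_A hk.
  split; first by move=> b; apply: CR_infinite.
  split; last exact: FCR.
  move=> b b' hbb'.
  have [d hd] : exists d, b d <> b' d.
    apply: NNPP => hn; apply: hbb'; apply: functional_extensionality => z.
    by apply: NNPP => hz; apply: hn; exists z.
  exists (bsum (fun j => thr hr' (pickle (code b j, tdec j)).+1) d.+1).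
  move=> x [[k [hk e]] [k' [hk' e']]].
  have kk := batch_uniq hk hk'; subst k'.
  set j := pickle (task k).2.
  have hj : j < d.+1.
    rewrite ltnNge; apply/negP => hdj.
    have : mkseq b j = mkseq b' j by apply: (pcan_inj pickleK_inv); rewrite -/(code b j) -/(code b' j) -e -e'.
    move=> hm; have := congr1 (fun l => nth false l d) hm.
    rewrite /= !nth_mkseq //; exact: hd.
  apply: leq_trans (bsum_ge _ hj).
  have hp := batch_pickle hk.
  have td : tdec j = (task k).2 by rewrite /tdec /j pickleK_inv.
  rewrite td -e.
  have -> : ((task k).1, (task k).2) = task k by case: (task k).
  rewrite hp; by have /andP [] := batch_bounds hk.
- pose G (p : nat) (x : nat) := exists k, batch hr' k x /\ (task k).1 = p.
  pose B (i : nat) (x : nat) :=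
    if i is 0 then A x /\ forall j, 0 < j -> ~ G j x else G i x.
  have GA : forall p x, G p x -> A x by move=> p x [k [hk _]]; exact: batch_A hk.
  have Gdisj : forall p q x, G p x -> G q x -> p = q.
    move=> p q x [k [hk <-]] [k' [hk' <-]]; by rewrite (batch_uniq hk hk').
  exists B; split.
    move=> x; split.
      move=> hx; case: (classic (exists j, 0 < j /\ G j x)).
        by move=> [[|j] [hj hg]] //; exists j.+1.
      move=> hn; exists 0; split => // j hj hg; apply: hn; by exists j.
    by move=> [[|i] hi] /=; [case: hi | exact: GA hi].
  split.
    move=> [|i] [|j] x hij //=.
    - by move=> [_ h] hg; exact: h j.+1 isT hg.
    - by move=> hg [_ h]; exact: h i.+1 isT hg.
    - move=> h1 h2; apply: hij; exact: Gdisj h1 h2.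
  move=> i; exists r; split => // n Hn L HL.
  set s := map val L.
  set t : TT := (i, (n, s)).
  have Ht := task_pickle t.
  have Hv : valid r n s by split => //; rewrite /s conv_val.
  have [a [H [Ha [HH Hs]]]] := batch_spec hr' Ht Hv.
  exists a, H; split => //; split => // x hx.
  have hb : batch hr' (pickle t) x by apply: Hs; rewrite /s conv_val.
  have hg : G i x by exists (pickle t); rewrite Ht.
  move: hg; clear -GA Gdisj; case: i => [|i] hg //=.
  split; first exact: GA hg.
  move=> j hj hgj; have := Gdisj _ _ _ hg hgj; by move=> e; rewrite -e in hj.
Qed.
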